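(* Let $A$ be a ring and $\mathfrak{I}$ an ideal of $A$ such that $A$ is separated and complete for the $\mathfrak{I}$-adic topology. Let ${}^*A$ be the ultrapower of $A$ with respect to a nonprincipal ultrafilter on $\mathbb{N}$ and $\mu(0):=\bigcap_{n>0}{}^*(\mathfrak{I}^n)$. Then: (i) $\varprojlim_n{}^*A/{}^*(\mathfrak{I}^{n+1})\cong{}^*A/\mu(0)$; (ii) there is a natural injective ring homomorphism $\widehat{A}\hookrightarrow{}^*A/\mu(0)$; (iii) this homomorphism is an isomorphism $\widehat{A}\cong{}^*A/\mu(0)$ if and only if $A/\mathfrak{I}^{n+1}$ is finite for every $n\in\mathbb{N}$.
   Context: $\widehat{A}=\varprojlim_n A/\mathfrak{I}^{n+1}$ is the $\mathfrak{I}$-adic completion (isomorphic to $A$ by assumption). ${}^*(\mathfrak{I}^n)$ denotes the nonstandard extension (ultrapower) of the ideal $\mathfrak{I}^n$, an ideal of ${}^*A$; the map in (ii) is induced by the diagonal embedding $A\to{}^*A$. *)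

(* Defs.v *)
From mathcomp Require Import all_boot all_algebra.
Set Implicit Arguments. Unset Strict Implicit. Unset Printing Implicit Defensive.
Import GRing.Theory.
Local Open Scope ring_scope.

Definition is_ideal (A : comPzRingType) (I : A -> Prop) : Prop :=
  I 0 /\ (forall x y, I x -> I y -> I (x + y)) /\ (forall a x, I x -> I (a * x)).

Definition ideal_pow (A : comPzRingType) (I : A -> Prop) (n : nat) (x : A) : Prop :=
  exists (k : nat) (c : 'I_k -> A) (f : 'I_k -> 'I_n -> A),
    (forall i j, I (f i j)) /\ x = \sum_(i < k) c i * \prod_(j < n) f i j.

Definition adic_separated (A : comPzRingType) (I : A -> Prop) : Prop :=
  forall x : A, (forall n, ideal_pow I n x) -> x = 0.

(* A is complete for the I-adic topology: every compatible family
   (a_n) in lim A/I^(n+1) comes from an element of A. *)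
Definition adic_complete (A : comPzRingType) (I : A -> Prop) : Prop :=
  forall a : nat -> A, (forall n, ideal_pow I n.+1 (a n.+1 - a n)) ->
    exists x : A, forall n, ideal_pow I n.+1 (x - a n).

Definition ultrafilter_nat (U : (nat -> Prop) -> Prop) : Prop :=
  [/\ U (fun _ => True), ~ U (fun _ => False),
      (forall S T : nat -> Prop, U S -> (forall k, S k -> T k) -> U T),
      (forall S T : nat -> Prop, U S -> U T -> U (fun k => S k /\ T k)) &
      (forall S : nat -> Prop, U S \/ U (fun k => ~ S k))].

Definition nonprincipal (U : (nat -> Prop) -> Prop) : Prop :=
  ~ exists n : nat, forall S : nat -> Prop, U S <-> S n.

(* The ultrapower *A is represented by sequences nat -> A, with two
   representatives identified when they agree U-almost everywhere.
   The nonstandard extension *S of a subset S of A: *)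
Definition star_set (A : Type) (U : (nat -> Prop) -> Prop) (S : A -> Prop)
  (x : nat -> A) : Prop := U (fun k => S (x k)).

Definition mu0 (A : comPzRingType) (U : (nat -> Prop) -> Prop) (I : A -> Prop)
  (x : nat -> A) : Prop :=
  forall n : nat, (0 < n)%N -> star_set U (ideal_pow I n) x.

Definition hsub (A : comPzRingType) (x y : nat -> A) : nat -> A := fun k => x k - y k.

Definition diag (A : Type) (a : A) : nat -> A := fun _ => a.

Definition finite_quotient (A : comPzRingType) (J : A -> Prop) : Prop :=
  exists s : seq A, forall a : A, exists2 b, b \in s & J (a - b).

(* Main.v *)
Require Import Defs.
From mathcomp Require Import all_boot all_algebra.
From Stdlib Require Import ClassicalEpsilon.
From mathcomp Require Import zify.
Set Implicit Arguments. Unset Strict Implicit.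
Import GRing.Theory.
Local Open Scope ring_scope.

Lemma ip0 (A : comPzRingType) (I : A -> Prop) n : ideal_pow I n 0.
Proof. exists 0%N, (fun _ => 0 : A), (fun _ _ => 0 : A); split; [by case | by rewrite big_ord0]. Qed.

Lemma ip_all (A : comPzRingType) (I : A -> Prop) x : ideal_pow I 0 x.
Proof.
exists 1%N, (fun _ => x), (fun _ _ => 0 : A); split; first by move=> ? [].
by rewrite big_ord1 big_ord0 mulr1.
Qed.

Lemma ipD (A : comPzRingType) (I : A -> Prop) n x y :
  ideal_pow I n x -> ideal_pow I n y -> ideal_pow I n (x + y).
Proof.
move=> [k1 [c1 [f1 [H1 ->]]]] [k2 [c2 [f2 [H2 ->]]]].
exists (k1 + k2)%N, (fun i => match split i with inl i1 => c1 i1 | inr i2 => c2 i2 end),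
  (fun i => match split i with inl i1 => f1 i1 | inr i2 => f2 i2 end); split.
  by move=> i j; case: (split i).
rewrite big_split_ord /=; congr (_ + _); apply: eq_bigr => i _.
  by rewrite (unsplitK (inl i)).
by rewrite (unsplitK (inr i)).
Qed.

Lemma ipN (A : comPzRingType) (I : A -> Prop) n x :
  ideal_pow I n x -> ideal_pow I n (- x).
Proof.
move=> [k [c [f [H ->]]]]; exists k, (fun i => - c i), f; split => //.
by rewrite -sumrN; apply: eq_bigr => i _; rewrite mulNr.
Qed.

Lemma ipB (A : comPzRingType) (I : A -> Prop) n x y :
  ideal_pow I n x -> ideal_pow I n y -> ideal_pow I n (x - y).
Proof. by move=> Hx Hy; apply: ipD => //; apply: ipN. Qed.

Lemma ipS (A : comPzRingType) (I : A -> Prop) n x :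
  ideal_pow I n.+1 x -> ideal_pow I n x.
Proof.
move=> [k [c [f [H ->]]]].
exists k, (fun i => c i * f i ord_max), (fun i j => f i (widen_ord (leqnSn n) j)); split => //.
apply: eq_bigr => i _; rewrite big_ord_recr /= -mulrA; congr (_ * _).
by rewrite mulrC.
Qed.

Lemma ip_mono (A : comPzRingType) (I : A -> Prop) m n x :
  (n <= m)%N -> ideal_pow I m x -> ideal_pow I n x.
Proof.
move=> /subnK <-; elim: (m - n)%N => [|d IH] //= H.
by apply: IH; apply: ipS.
Qed.
Definition decb (P : Prop) : bool := if excluded_middle_informative P then true else false.
Lemma decbP (P : Prop) : reflect P (decb P).
Proof. by rewrite /decb; case: excluded_middle_informative => H; constructor. Qed.

Lemma uf_empty U S : ultrafilter_nat U -> U S -> (forall k, ~ S k) -> False.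
Proof. by case=> _ HF Hm _ _ HS HN; apply: HF; apply: Hm HS _ => k /HN. Qed.

Lemma uf_mono U S T : ultrafilter_nat U -> U S -> (forall k, S k -> T k) -> U T.
Proof. by case=> _ _ Hm _ _; apply: Hm. Qed.

Lemma uf_and U S T : ultrafilter_nat U -> U S -> U T -> U (fun k => S k /\ T k).
Proof. by case=> _ _ _ Ha _; apply: Ha. Qed.

Lemma uf_single U j : ultrafilter_nat U -> nonprincipal U -> U (fun k => k = j) -> False.
Proof.
move=> HU Hnp Hj; apply: Hnp; exists j => S; split.
  move=> HS; have := uf_and HU HS Hj.
  case: (decbP (S j)) => // nS H; exfalso; apply: (uf_empty HU H) => k [Sk Ekj]; apply: nS; by rewrite -Ekj.
by move=> Sj; apply: (uf_mono HU Hj) => k ->.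
Qed.

Lemma uf_cofin U n : ultrafilter_nat U -> nonprincipal U -> U (fun k => (n <= k)%N).
Proof.
move=> HU Hnp; have := HU; case=> _ _ _ _ Hc.
case: (Hc (fun k => (n <= k)%N)) => // H; exfalso.
elim: n H => [|n IH] H.
  by apply: (uf_empty HU H) => k; apply.
case: (Hc (fun k => k = n)) => [Hn|Hn]; first exact: (uf_single HU Hnp Hn).
apply: IH; apply: (uf_mono HU (uf_and HU H Hn)) => k [H1 H2].

lia.
Qed.

Lemma tele (A : comPzRingType) (I : A -> Prop) (z : nat -> A) n N : (n <= N)%N ->
  (forall m, (n <= m)%N -> (m < N)%N -> ideal_pow I m.+1 (z m.+1 - z m)) ->
  ideal_pow I n.+1 (z N - z n).
Proof.
elim: N => [|N IH] HnN H.
  have -> : n = 0%N by lia.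
  by rewrite subrr; apply: ip0.
case: (ltngtP n N.+1) => [Hlt||->]; [|lia|by rewrite subrr; apply: ip0].
have -> : z N.+1 - z n = (z N.+1 - z N) + (z N - z n) by rewrite addrA subrK.
apply: ipD; last by apply: IH => [|m H1 H2]; [lia| apply: H; lia].
apply: (@ip_mono _ _ N.+1); [lia| apply: H; lia].
Qed.

Lemma sat (A : comPzRingType) (I : A -> Prop) U : ultrafilter_nat U -> nonprincipal U ->
  forall x : nat -> nat -> A,
      (forall n, star_set U (ideal_pow I n.+1) (hsub (x n.+1) (x n))) ->
      exists y : nat -> A, forall n, star_set U (ideal_pow I n.+1) (hsub y (x n)).
Proof.
move=> HU Hnp x Hx.
pose P m k := ideal_pow I m.+1 (x m.+1 k - x m k).
pose D n k := (n <= k)%N /\ forall m, (m < n)%N -> P m k.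
have UD : forall n, U (D n).
  move=> n; have : U (fun k => forall m, (m < n)%N -> P m k).
    elim: n => [|n IH].
      by have := HU; case=> HT _ _ _ _; apply: (uf_mono HU HT).
    apply: (uf_mono HU (uf_and HU IH (Hx n))) => k [H1 H2] m.
    rewrite ltnS leq_eqVlt => /orP[/eqP -> //|]; exact: H1.
  by move=> H; apply: (uf_mono HU (uf_and HU (uf_cofin n HU Hnp) H)).
have ex : forall k, exists n, ~~ decb (D n.+1 k).
  by move=> k; exists k; apply/decbP => -[]; lia.
exists (fun k => x (ex_minn (ex k)) k) => n.
apply: (uf_mono HU (UD n.+1)) => k [Dk1 Dk2].
rewrite /hsub; case: ex_minnP => N HN Hmin.
have ltnN : (n < N)%N.
  rewrite ltnNge; apply/negP => HNn; move/decbP: HN; apply; split; first lia.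
  by move=> m Hm; apply: Dk2; lia.
have [_ DN] : D N k.
  case: (decbP (D N k)) => // nD; case: N HN Hmin ltnN nD => [|N'] HN Hmin ltnN nD; first lia.
  have := Hmin N' (introN (decbP _) nD); lia.
apply: (tele (z := fun m => x m k)); first lia.
by move=> m H1 H2; apply: DN.
Qed.

Fixpoint build (T : Type) (p : seq T -> T) (k : nat) : seq T :=
  match k with 0 => [::] | k'.+1 => p (build p k') :: build p k' end.

Lemma build_in (T : eqType) (p : seq T -> T) j k : (j < k)%N -> p (build p j) \in build p k.
Proof.
elim: k => [|k IH] //; rewrite ltnS leq_eqVlt => /orP[/eqP ->|/IH H].
  by rewrite /= inE eqxx.
by rewrite /= inE H orbT.
Qed.

Lemma ip_diff (A : comPzRingType) (I : A -> Prop) n u v w :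
  ideal_pow I n (u - w) -> ideal_pow I n (v - w) -> ideal_pow I n (u - v).
Proof.
move=> H1 H2; have -> : u - v = (u - w) - (v - w) by rewrite opprB addrA subrK.
exact: ipB.
Qed.

Lemma surj_fin (A : comPzRingType) (I : A -> Prop) U : ultrafilter_nat U -> nonprincipal U ->
  (forall x : nat -> A, exists a : A, mu0 U I (hsub x (diag a))) ->
  forall n : nat, finite_quotient (ideal_pow I n.+1).
Proof.
move=> HU Hnp Hs n; case: (decbP (finite_quotient (ideal_pow I n.+1))) => // nF; exfalso.
pose J := ideal_pow I n.+1.
have H : forall s : seq A, exists a, forall b, b \in s -> ~ J (a - b).
  move=> s; case: (decbP (exists a, forall b, b \in s -> ~ J (a - b))) => // nE; exfalso.
  apply: nF; exists s => a.
  case: (decbP (exists2 b, b \in s & J (a - b))) => // nb; exfalso.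
  by apply: nE; exists a => b bs Jb; apply: nb; exists b.
pose pick s := proj1_sig (constructive_indefinite_description _ (H s)).
have pickP : forall s b, b \in s -> ~ J (pick s - b).
  by move=> s; rewrite /pick; case: constructive_indefinite_description.
pose x k := pick (build pick k).
have xd : forall j k, (j < k)%N -> ~ J (x k - x j).
  by move=> j k jk; apply: pickP; apply: build_in.
have [a Ha] := Hs x.
have Ua : U (fun k => J (x k - a)) by apply: (Ha n.+1).
have [j Jj] : exists j, J (x j - a).
  case: (decbP (exists j, J (x j - a))) => // nj; exfalso.
  by apply: (uf_empty HU Ua) => k Jk; apply: nj; exists k.
apply: (uf_single HU Hnp (j := j)); apply: (uf_mono HU Ua) => k Jk.
case: (ltngtP j k) => // [jk|kj]; exfalso.
  by apply: (xd _ _ jk); apply: ip_diff Jk Jj.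
by apply: (xd _ _ kj); apply: ip_diff Jj Jk.
Qed.

Lemma pigeon (A : comPzRingType) U (J : A -> Prop) (x : nat -> A) (S : nat -> Prop) (s : seq A) :
  ultrafilter_nat U ->
  U (fun k => S k /\ exists2 b, b \in s & J (x k - b)) -> exists b, U (fun k => S k /\ J (x k - b)).
Proof.
move=> HU; have := HU; case=> _ _ _ _ Hc.
elim: s => [|b s IH] H.
  by exfalso; apply: (uf_empty HU H) => k [_ []].
case: (Hc (fun k => S k /\ J (x k - b))) => Hb; first by exists b.
apply: IH; apply: (uf_mono HU (uf_and HU H Hb)) => k [[Sk [b' b's Jb']] nb]; split => //.
move: b's; rewrite inE => /orP[/eqP Eb|]; last by exists b'.
by exfalso; apply: nb; split => //; rewrite -Eb.
Qed.

Lemma fin_surj (A : comPzRingType) (I : A -> Prop) U : ultrafilter_nat U -> adic_complete I ->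
  (forall n : nat, finite_quotient (ideal_pow I n.+1)) ->
  (forall x : nat -> A, exists a : A, mu0 U I (hsub x (diag a))).
Proof.
move=> HU Hcomp Hfin x.
pose T n b := fun k => ideal_pow I n.+1 (x k - b).
have pig : forall n S, U S -> exists b, U (fun k => S k /\ T n b k).
  move=> n S HS; have [s Hs] := Hfin n.
  apply: (pigeon (s := s) HU); apply: (uf_mono HU HS) => k Sk; split => //; exact: Hs.
have step : forall n b, exists b', U (T n b) -> U (T n.+1 b') /\ ideal_pow I n.+1 (b' - b).
  move=> n b; case: (decbP (U (T n b))) => HT; last by exists 0.
  have [b' Hb'] := pig n.+1 _ HT; exists b' => _; split.
    by apply: (uf_mono HU Hb') => k [].
  have [k [T1 T2]] : exists k, T n b k /\ T n.+1 b' k.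
    case: (decbP (exists k, T n b k /\ T n.+1 b' k)) => // nk; exfalso.
    by apply: (uf_empty HU Hb') => k Hk; apply: nk; exists k.
  have -> : b' - b = (x k - b) - (x k - b').
  by rewrite opprB [RHS]addrC addrA subrK.
  by apply: ipB => //; apply: ipS.
have [b0 Hb0] : exists b, U (T 0%N b).
  have := HU; case=> HTr _ _ _ _.
  by have [b Hb] := pig 0%N _ HTr; exists b; apply: (uf_mono HU Hb) => k [].
pose g n b := proj1_sig (constructive_indefinite_description _ (step n b)).
have gP : forall n b, U (T n b) -> U (T n.+1 (g n b)) /\ ideal_pow I n.+1 (g n b - b).
  by move=> n b; rewrite /g; case: constructive_indefinite_description.
pose a := fix a n := match n with 0%N => b0 | n'.+1 => g n' (a n') end.
have Ha : forall n, U (T n (a n)).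
  by elim => [|n IH] //=; apply: (gP _ _ IH).1.
have [y Hy] := Hcomp a (fun n => (gP _ _ (Ha n)).2).
exists y => n; case: n => [|m] // _.
apply: (uf_mono HU (Ha m)) => k Hk; rewrite /hsub /diag.
exact: (ip_diff Hk (Hy m)).
Qed.

Theorem corollary2p6p3 (A : comPzRingType) (I : A -> Prop)
  (U : (nat -> Prop) -> Prop) :
  is_ideal I -> adic_separated I -> adic_complete I ->
  ultrafilter_nat U -> nonprincipal U ->
  (* (i) the natural map *A/mu(0) -> lim_n *A/*(I^(n+1)) is bijective *)
  ((forall x : nat -> A,
      (forall n, star_set U (ideal_pow I n.+1) x) <-> mu0 U I x) /\
   (forall x : nat -> nat -> A,
      (forall n, star_set U (ideal_pow I n.+1) (hsub (x n.+1) (x n))) ->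
      exists y : nat -> A, forall n, star_set U (ideal_pow I n.+1) (hsub y (x n))))
  /\
  (* (ii) the ring map A (= \hat A) -> *A/mu(0) induced by the diagonal is injective *)
  (forall a b : A, mu0 U I (hsub (diag a) (diag b)) -> a = b)
  /\
  (* (iii) it is surjective iff every A/I^(n+1) is finite *)
  ((forall x : nat -> A, exists a : A, mu0 U I (hsub x (diag a))) <->
   (forall n : nat, finite_quotient (ideal_pow I n.+1))).
Proof.
move=> _ Hsep Hcomp HU Hnp; split; [split|split].
- move=> x; split => H; first by case=> [|n] //; move=> _; apply: H.
  by move=> n; apply: H.
- exact: sat.
- move=> a b H; apply/eqP; rewrite -subr_eq0; apply/eqP; apply: Hsep; case=> [|n].
    exact: ip_all.
  have Hn := H n.+1 isT; rewrite /star_set /hsub /diag in Hn.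
  case: (decbP (ideal_pow I n.+1 (a - b))) => // nI; exfalso.
  exact: (uf_empty HU Hn).
- split; first exact: surj_fin.
  exact: fin_surj.
Qed.
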